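(* Let $f\in\mathbb{F}_q[t][X]$ have $X$-degree $n\ge1$, and for $0\le i\le n-1$ let $B_i=\sup\{m\in\mathbb{N}:(m,i)\in N(f)+\{(0,-1)\}\}$. Let $g\in\mathbb{F}_q[t][X]$ be a nonzero polynomial dividing $f$ in $\mathbb{F}_q[t][X]$ and write $\Phi(g):=fg'/g=\sum_{i=0}^{n-1}a_i(t)X^i$. Then for each $i$ with $a_i\neq0$, the set defining $B_i$ is nonempty and $\deg a_i\le B_i$.
   Context: The Newton polygon $N(h)\subset\mathbb{R}^2$ of $h\in\mathbb{F}_q[t,X]$ is the convex hull of all points $(a,b)$ such that the coefficient of $t^aX^b$ in $h$ is nonzero. For $S_1,S_2\subseteq\mathbb{R}^2$, $S_1+S_2=\{s_1+s_2:s_1\in S_1,s_2\in S_2\}$. $g'$ is the derivative with respect to $X$. *)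

(* Defs.v *)
From HB Require Import structures.
From mathcomp Require Import all_boot all_order all_algebra.
Set Implicit Arguments. Unset Strict Implicit. Unset Printing Implicit Defensive.
Import Order.TTheory GRing.Theory Num.Theory.
Local Open Scope ring_scope.

(* Polynomials in F[t][X] are represented as {poly {poly F}}: the outer
   variable is X, the coefficients are polynomials in t.  The coefficient of
   t^a X^b in f is (f`_b)`_a. *)

Definition plane_set (R : realFieldType) := R * R -> Prop.

Definition newton_polygon (F : fieldType) (R : realFieldType)
  (f : {poly {poly F}}) : plane_set R :=
  fun p => exists (k : nat) (pts : 'I_k -> nat * nat) (w : 'I_k -> R),
    [/\ forall j, (f`_(pts j).2)`_(pts j).1 != 0,
        forall j, 0 <= w j,
        \sum_(j < k) w j = 1,
        p.1 = \sum_(j < k) w j * ((pts j).1)%:R &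
        p.2 = \sum_(j < k) w j * ((pts j).2)%:R].

Arguments newton_polygon {F} R f.

Definition minkowski_sum (R : realFieldType) (S1 S2 : plane_set R) : plane_set R :=
  fun p => exists p1 p2, [/\ S1 p1, S2 p2 & p = (p1.1 + p2.1, p1.2 + p2.2)].

Definition singleton_pt (R : realFieldType) (q : R * R) : plane_set R :=
  fun p => p = q.

Definition B_set (F : fieldType) (R : realFieldType) (f : {poly {poly F}})
  (i : nat) : nat -> Prop :=
  fun m => minkowski_sum (newton_polygon R f) (singleton_pt (0, -1))
             ((m%:R : R), (i%:R : R)).

Arguments B_set {F} R f i.

(* Main.v *)
Require Import Defs.
From HB Require Import structures.
From mathcomp Require Import all_boot all_order all_algebra.
From mathcomp Require Import reals.
From mathcomp Require Import ring lra zify.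
From Stdlib Require Import Classical.
Import Order.TTheory GRing.Theory Num.Theory.
Local Open Scope ring_scope.

Lemma argmax_seq (R : realDomainType) (T : eqType) (s : seq T) (F : T -> R) :
  s != [::] -> exists2 x, x \in s & forall y, y \in s -> F y <= F x.
Proof.
elim: s => [//|a s IH] _.
case: (eqVneq s [::]) => [->|/IH [x xs Hx]].
  exists a; first by rewrite mem_head.
  by move=> y; rewrite inE => /eqP ->.
case: (leP (F a) (F x)) => h.
  exists x; first by rewrite inE xs orbT.
  by move=> y; rewrite inE => /predU1P [->|/Hx].
exists a; first exact: mem_head.
move=> y; rewrite inE => /predU1P [->//|/Hx h2].
exact: (le_trans h2 (ltW h)).
Qed.

Lemma sep (R : realFieldType) (xs ys : seq R) :
  (forall x y, x \in xs -> y \in ys -> x < y) ->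
  exists w, (forall x, x \in xs -> x < w) /\ (forall y, y \in ys -> w < y).
Proof.
move=> H.
case: (eqVneq xs [::]) => [->|/(@argmax_seq R R xs id) [xm xmi Hxm]];
case: (eqVneq ys [::]) => [->|/(@argmax_seq R R ys (fun y => - y)) [ym ymi Hym]].
- by exists 0.
- exists (ym - 1); split => // y /Hym; rewrite lerN2 => h; lra.
- exists (xm + 1); split => // x /Hxm => h; lra.
- have := H _ _ xmi ymi => h.
  exists ((xm + ym) / 2); split.
    move=> x /Hxm h2; lra.
  move=> y /Hym; rewrite lerN2 => h2; lra.
Qed.

Arguments argmax_seq {R T s} F.

Lemma dual (R : realFieldType) (S : seq (R * R)) (y0 d : R) :
  (forall w : R, exists2 q, q \in S & d + w * y0 <= q.1 + w * q.2) ->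
  exists q1 q2 lam, [/\ q1 \in S, q2 \in S, 0 <= lam <= 1,
     lam * q1.2 + (1 - lam) * q2.2 = y0 & d <= lam * q1.1 + (1 - lam) * q2.1].
Proof.
move=> H; apply: NNPP => Hn.
have Hi : forall q, q \in S -> q.2 = y0 -> q.1 < d.
  move=> q qS e; rewrite ltNge; apply/negP => h; apply: Hn.
  exists q, q, 1; split => //; first by rewrite ler01 lexx.
    by rewrite subrr mul0r addr0 mul1r.
  by rewrite subrr mul0r addr0 mul1r.
have Hii : forall q1 q2, q1 \in S -> q2 \in S -> q1.2 < y0 -> y0 < q2.2 ->
    (q1.1 - d) / (y0 - q1.2) < (d - q2.1) / (q2.2 - y0).
  move=> q1 q2 q1S q2S h1 h2.
  have D1 : 0 < y0 - q1.2 by lra.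
  have D2 : 0 < q2.2 - y0 by lra.
  rewrite ltr_pdivrMr // mulrAC ltr_pdivlMr //.
  rewrite ltNge; apply/negP => h; apply: Hn.
  set D := (y0 - q1.2) + (q2.2 - y0).
  have DP : 0 < D by rewrite /D; lra.
  exists q1, q2, ((q2.2 - y0) / D); split => //.
  - apply/andP; split; first by apply: divr_ge0; lra.
    rewrite ler_pdivrMr // mul1r /D; lra.
  - rewrite /D; field; rewrite -/D; exact: lt0r_neq0.
  - have e : 1 - (q2.2 - y0) / D = (y0 - q1.2) / D.
      by rewrite /D; field; rewrite -/D; exact: lt0r_neq0.
    rewrite e mulrAC [X in _ + X]mulrAC -mulrDl ler_pdivlMr // /D.
    nra.
pose xs := [seq (q.1 - d) / (y0 - q.2) | q <- S & q.2 < y0].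
pose ys := [seq (d - q.1) / (q.2 - y0) | q <- S & y0 < q.2].
have [w [Hw1 Hw2]] : exists w, (forall x, x \in xs -> x < w) /\ (forall y, y \in ys -> w < y).
  apply: sep => x y /mapP [q1 + ->] /mapP [q2 + ->].
  rewrite !mem_filter => /andP [h1 q1S] /andP [h2 q2S]; exact: Hii.
have [q qS Hq] := H w.
case: (ltgtP q.2 y0) => h.
- have := Hw1 ((q.1 - d) / (y0 - q.2)).
  have hm : (q.1 - d) / (y0 - q.2) \in xs by rewrite /xs; apply: map_f; rewrite mem_filter h qS.
  move=> /(_ hm).
  have D1 : 0 < y0 - q.2 by lra.
  rewrite ltr_pdivrMr // => h2; nra.
- have := Hw2 ((d - q.1) / (q.2 - y0)).
  have hm : (d - q.1) / (q.2 - y0) \in ys by rewrite /ys; apply: map_f; rewrite mem_filter h qS.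
  move=> /(_ hm).
  have D1 : 0 < q.2 - y0 by lra.
  rewrite ltr_pdivlMr // => h2; nra.
- have := Hi q qS h; rewrite h in Hq; lra.
Qed.

Definition supp (F : fieldType) (p : {poly {poly F}}) : seq (nat * nat) :=
  [seq q <- [seq (a, b) | b <- iota 0 (size p), a <- iota 0 (size p`_b)]
     | p`_q.2`_q.1 != 0].
Arguments supp {F}.

Lemma mem_supp (F : fieldType) (p : {poly {poly F}}) (q : nat * nat) :
  (q \in supp p) = (p`_q.2`_q.1 != 0).
Proof.
rewrite mem_filter; apply/idP/idP; first by case/andP.
move=> nz; rewrite nz /=; case: q nz => a b /= nz.
apply/allpairsPdep; exists b, a; split => //; rewrite mem_iota /= add0n.
  rewrite ltnNge; apply: contra nz => h.
  have -> : p`_b = 0 by rewrite nth_default.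
  by rewrite coef0.
rewrite ltnNge; apply: contra nz => h; by rewrite nth_default.
Qed.

Definition phiw (R : realFieldType) (u w : R) (q : nat * nat) : R :=
  u * (q.1)%:R + w * (q.2)%:R.
Arguments phiw {R}.

Lemma phiwD (R : realFieldType) (u w : R) (a1 b1 a2 b2 : nat) :
  phiw u w (a1 + a2, b1 + b2)%N = phiw u w (a1, b1) + phiw u w (a2, b2).
Proof. rewrite /phiw /= !natrD; ring. Qed.

Lemma best (R : realFieldType) (u w : R) (s : seq (nat * nat)) :
  s != [::] -> exists2 p, p \in s &
   [/\ forall x, x \in s -> phiw u w x <= phiw u w p,
       forall x, x \in s -> phiw u w x = phiw u w p -> (x.2 <= p.2)%N &
       forall x, x \in s -> phiw u w x = phiw u w p -> x.2 = p.2 -> (x.1 <= p.1)%N].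
Proof.
move=> ns.
have [p1 p1s H1] := argmax_seq (phiw u w) ns.
pose s1 := [seq x <- s | phiw u w x == phiw u w p1].
have ns1 : s1 != [::].
  apply/eqP => e; have : p1 \in s1 by rewrite mem_filter eqxx p1s.
  by rewrite e.
have [p2 p2s H2] := argmax_seq (fun x : nat * nat => (x.2)%:R : R) ns1.
pose s2 := [seq x <- s1 | x.2 == p2.2].
have ns2 : s2 != [::].
  apply/eqP => e; have : p2 \in s2 by rewrite mem_filter eqxx p2s.
  by rewrite e.
have [p3 p3s H3] := argmax_seq (fun x : nat * nat => (x.1)%:R : R) ns2.
move: (p3s); rewrite mem_filter => /andP [/eqP e2 p3s1].
move: (p3s1); rewrite mem_filter => /andP [/eqP e1 p3s0].
exists p3 => //; split.
- by move=> x /H1; rewrite e1.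
- move=> x xs ex; rewrite e2 -(ler_nat R); apply: H2.
  by rewrite mem_filter ex e1 eqxx.
- move=> x xs ex ey; rewrite -(ler_nat R); apply: H3.
  by rewrite mem_filter ey e2 eqxx /= mem_filter ex e1 eqxx.
Qed.

Arguments best {R} u w {s}.

Lemma prod_supp (F : fieldType) (R : realFieldType) (u w : R)
  (g h : {poly {poly F}}) P Q :
  P \in supp g -> Q \in supp h ->
  exists2 q, q \in supp (g * h) & phiw u w P + phiw u w Q <= phiw u w q.
Proof.
move=> Pg Qh.
have ng : supp g != [::] by apply/eqP => e; rewrite e in Pg.
have nh : supp h != [::] by apply/eqP => e; rewrite e in Qh.
have [[a1 b1] p3s [G1 G2 G3]] := best u w ng.
have [[a2 b2] q3s [K1 K2 K3]] := best u w nh.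
have key : forall k c, (k <= b1 + b2)%N -> (c <= a1 + a2)%N ->
    g`_k`_c * h`_(b1 + b2 - k)`_(a1 + a2 - c) != 0 -> k = b1 /\ c = a1.
  move=> k c hk hc; rewrite mulf_eq0 negb_or => /andP [n1 n2].
  have x1 : (c, k) \in supp g by rewrite mem_supp.
  have x2 : (a1 + a2 - c, b1 + b2 - k)%N \in supp h by rewrite mem_supp.
  have E : phiw u w (c, k) + phiw u w (a1 + a2 - c, b1 + b2 - k)%N
         = phiw u w (a1, b1) + phiw u w (a2, b2).
    by rewrite -!phiwD /= !subnKC.
  have l1 := G1 _ x1; have l2 := K1 _ x2.
  have E1 : phiw u w (c, k) = phiw u w (a1, b1) by lra.
  have E2 : phiw u w (a1 + a2 - c, b1 + b2 - k)%N = phiw u w (a2, b2) by lra.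
  have m1 := G2 _ x1 E1; have m2 := K2 _ x2 E2; rewrite /= in m1 m2.
  have ek : k = b1.
    move: m1 m2 hk; clear; move=> m1 m2 hk; lia.
  have ek2 : (b1 + b2 - k)%N = b2 by rewrite ek addKn.
  have m3 := G3 _ x1 E1 ek.
  have m4 := K3 _ x2 E2 ek2; rewrite /= in m3 m4.
  split => //; move: m3 m4 hc; clear; move=> m3 m4 hc; lia.
exists (a1 + a2, b1 + b2)%N; last first.
  rewrite phiwD; apply: lerD; [exact: G1 | exact: K1].
rewrite mem_supp /= coefM coef_sum.
have hb1 : (b1 < (b1 + b2).+1)%N by rewrite ltnS leq_addr.
rewrite (bigD1 (Ordinal hb1)) // big1; last first.
  move=> [k hk] nk; rewrite coefM; apply: big1 => [[c hc]] _.
  have hk' : (k <= b1 + b2)%N by rewrite -ltnS.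
  have hc' : (c <= a1 + a2)%N by rewrite -ltnS.
  apply/eqP; apply: contraR nk => /(key k c hk' hc') [ek _].
  by apply/eqP; apply: val_inj.
rewrite /= addr0 coefM addKn.
have ha1 : (a1 < (a1 + a2).+1)%N by rewrite ltnS leq_addr.
rewrite (bigD1 (Ordinal ha1)) // big1; last first.
  move=> [c hc] nc; apply/eqP; apply: contraR nc.
  have hc' : (c <= a1 + a2)%N by rewrite -ltnS.
  move=> Hn; have := key b1 c (leq_addr _ _) hc'; rewrite addKn => /(_ Hn) [_ ec].
  by apply/eqP; apply: val_inj.
rewrite /= addr0 addKn mulf_neq0 //.
  by move: p3s; rewrite mem_supp.
by move: q3s; rewrite mem_supp.
Qed.

Arguments prod_supp {F R} u w {g h P Q}.

Lemma np_pt (F : fieldType) (R : realFieldType) (f : {poly {poly F}}) (a b : nat) :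
  f`_b`_a != 0 -> newton_polygon R f (a%:R, b%:R).
Proof.
move=> nz; exists 1%N, (fun _ => (a, b)), (fun _ => 1); split => //; try by rewrite big_ord1 ?mul1r.
all: try (by move=> _; exact: ler01). Qed.

Arguments np_pt {F} R {f a b}.

Lemma np_conv (F : fieldType) (R : realFieldType) (f : {poly {poly F}}) (p q : R * R) (lam : R) :
  newton_polygon R f p -> newton_polygon R f q -> 0 <= lam <= 1 ->
  newton_polygon R f (lam * p.1 + (1 - lam) * q.1, lam * p.2 + (1 - lam) * q.2).
Proof.
move=> [k1 [pts1 [w1 [H1 H2 H3 H4 H5]]]] [k2 [pts2 [w2 [K1 K2 K3 K4 K5]]]] /andP [l0 l1].
exists (k1 + k2)%N,
  (fun j => match split j with inl a => pts1 a | inr b => pts2 b end),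
  (fun j => match split j with inl a => lam * w1 a | inr b => (1 - lam) * w2 b end).
have sl : forall a : 'I_k1, @split k1 k2 (lshift k2 a) = inl a by move=> a; exact: (@unsplitK k1 k2 (inl a)).
have sr : forall b : 'I_k2, @split k1 k2 (rshift k1 b) = inr b by move=> b; exact: (@unsplitK k1 k2 (inr b)).
split.
- by move=> j; case: (split j).
- move=> j; case: (split j) => x; apply: mulr_ge0 => //; lra.
- rewrite big_split_ord /=.
  under eq_bigr do rewrite sl.
  under [X in _ + X]eq_bigr do rewrite sr.
  by rewrite -!mulr_sumr H3 K3 !mulr1 addrC subrK.
- rewrite big_split_ord /= H4 K4.
  rewrite [X in _ = X + _](eq_bigr (fun i => lam * (w1 i * (pts1 i).1%:R))); last by move=> i _; rewrite sl mulrA.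
  rewrite [X in _ = _ + X](eq_bigr (fun i => (1 - lam) * (w2 i * (pts2 i).1%:R))); last by move=> i _; rewrite sr mulrA.
  by rewrite -!mulr_sumr.
- rewrite big_split_ord /= H5 K5.
  rewrite [X in _ = X + _](eq_bigr (fun i => lam * (w1 i * (pts1 i).2%:R))); last by move=> i _; rewrite sl mulrA.
  rewrite [X in _ = _ + X](eq_bigr (fun i => (1 - lam) * (w2 i * (pts2 i).2%:R))); last by move=> i _; rewrite sr mulrA.
  by rewrite -!mulr_sumr.
Qed.
Arguments np_conv {F R f p q lam}.

Theorem lemma5p3 (F : finFieldType) (R : realType) (n : nat)
  (f g phi : {poly {poly F}}) :
  (1 <= n)%N -> size f = n.+1 ->
  g != 0 -> (exists h : {poly {poly F}}, f = g * h) ->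
  g * phi = f * g^`() ->
  forall i : nat, (i < n)%N -> phi`_i != 0 ->
    (exists m : nat, B_set R f i m) /\
    (exists m : nat, B_set R f i m /\ leq (size phi`_i).-1 m).
Proof.
move=> n1 sf g0 [h eh] ephi i lti nz.
have phiE : phi = h * g^`().
  by apply: (mulfI g0); rewrite ephi eh mulrA.
have [k [l [hk gl ekl dle]]] : exists k l, [/\ h`_k != 0, g`_l != 0, (k + l)%N = i.+1 &
    leq (size phi`_i).-1 ((size h`_k).-1 + (size g`_l).-1)].
  move: nz; rewrite phiE coefM => nz.
  have [k0 Hk0] := bigop.eq_bigmax (fun j : 'I_i.+1 => size (h`_j * g^`()`_(i - j)))
     (ltac:(by rewrite card_ord)).
  have hs : leq (size (\sum_(j < i.+1) h`_j * g^`()`_(i - j))) (size (h`_k0 * g^`()`_(i - k0))).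
    by rewrite -Hk0; exact: size_sum.
  have tnz : h`_k0 * g^`()`_(i - k0) != 0.
    apply/eqP => e; rewrite e size_poly0 leqn0 size_poly_eq0 in hs.
    by rewrite (eqP hs) eqxx in nz.
  have k0i : (k0 <= i)%N by rewrite -ltnS.
  rewrite coef_deriv in tnz hs.
  exists k0, (i - k0).+1; split.
  - by apply: contraNneq tnz => ->; rewrite mul0r.
  - by apply: contraNneq tnz => ->; rewrite mul0rn mulr0.
  - by rewrite addnS subnKC.
  - have s1 := size_polyMleq h`_k0 (g`_(i - k0).+1 *+ (i - k0).+1).
    have s2 : leq (size (g`_(i - k0).+1 *+ (i - k0).+1)) (size g`_(i - k0).+1).
      by rewrite -scaler_nat size_scale_leq.
    have p1 : leq 1 (size h`_k0).
      by rewrite size_poly_gt0; apply: contraNneq tnz => ->; rewrite mul0r.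
    have p2 : leq 1 (size g`_(i - k0).+1).
      by rewrite size_poly_gt0; apply: contraNneq tnz => ->; rewrite mul0rn mulr0.
    move: hs s1 s2 p1 p2.
    move: (size (\sum_(j < i.+1) h`_j * g^`()`_(i - j))) => A.
    move: (size (h`_k0 * (g`_(i - k0).+1 *+ (i - k0).+1))) (size h`_k0)
          (size (g`_(i - k0).+1 *+ (i - k0).+1)) (size g`_(i - k0).+1) => C D E G.
    clear; move=> h1 h2 h3 h4 h5. 
    lia.
set d := addn (size h`_k).-1 (size g`_l).-1.
have Pg : ((size g`_l).-1, l) \in supp g.
  by rewrite mem_supp /= -lead_coefE lead_coef_eq0.
have Qh : ((size h`_k).-1, k) \in supp h.
  by rewrite mem_supp /= -lead_coefE lead_coef_eq0.
have ed : (d%:R : R) = ((size g`_l).-1)%:R + ((size h`_k).-1)%:R.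
  by rewrite /d natrD addrC.
have ey : ((i.+1)%:R : R) = l%:R + k%:R by rewrite -ekl natrD addrC.
have inS : forall (q : R * R) (sg : R), q \in [seq (sg * (x.1)%:R, (x.2)%:R) | x <- supp f] ->
    exists a b : nat, [/\ f`_b`_a != 0, q.1 = sg * a%:R & q.2 = b%:R].
  move=> q sg /mapP [[a b] xs ->]; exists a, b; split => //.
  by move: xs; rewrite mem_supp.
have [q1 [q2 [lam [q1S q2S hlam ey1 hd1]]]] :=
  @dual R [seq (1 * (x.1)%:R, (x.2)%:R) | x <- supp f] (i.+1)%:R d%:R
   (fun w => ltac:(
     have [q qS Hq] := prod_supp 1 w Pg Qh;
     rewrite -eh in qS;
     exists (1 * (q.1)%:R, (q.2)%:R); [by apply: map_f |];
     rewrite /phiw /= in Hq; rewrite ed ey /=; lra)).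
have [a1 [b1 [n11 e11 e12]]] := inS _ _ q1S.
have [a2 [b2 [n21 e21 e22]]] := inS _ _ q2S.
have NU := np_conv (np_pt R n11) (np_pt R n21) hlam.
rewrite e11 e12 e21 e22 /= !mul1r in ey1 hd1.
rewrite /= ey1 in NU.
have [r1 [r2 [mu [r1S r2S hmu ey2 hd2]]]] :=
  @dual R [seq (-1 * (x.1)%:R, (x.2)%:R) | x <- supp f] (i.+1)%:R (- d%:R)
   (fun w => ltac:(
     have [q qS Hq] := prod_supp (-1) w Pg Qh;
     rewrite -eh in qS;
     exists (-1 * (q.1)%:R, (q.2)%:R); [by apply: map_f |];
     rewrite /phiw /= in Hq; rewrite ed ey /=; lra)).
have [c1 [d1 [m11 f11 f12]]] := inS _ _ r1S.
have [c2 [d2 [m21 f21 f22]]] := inS _ _ r2S.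
have NL := np_conv (np_pt R m11) (np_pt R m21) hmu.
rewrite f11 f12 f21 f22 /= in ey2 hd2.
rewrite /= ey2 in NL.
set xU := lam * (a1%:R) + (1 - lam) * (a2%:R) in NU hd1.
set xL := mu * (c1%:R) + (1 - mu) * (c2%:R) in NL.
have hxL : xL <= d%:R by rewrite /xL; lra.
have ND : newton_polygon R f (d%:R, (i.+1)%:R).
  case: (eqVneq xU xL) => exL.
    have ex : xU = d%:R by lra.
    by rewrite -ex.
  have pos : 0 < xU - xL by rewrite subr_gt0 lt_neqAle eq_sym exL /=; lra.
  pose nu := (d%:R - xL) / (xU - xL).
  have hnu : 0 <= nu <= 1.
    apply/andP; split; first by apply: divr_ge0; lra.
    by rewrite ler_pdivrMr // mul1r; lra.
  have := np_conv NU NL hnu; rewrite /=.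
  have -> : nu * xU + (1 - nu) * xL = d%:R.
    rewrite /nu; field; exact: lt0r_neq0.
  by have -> : nu * (i.+1)%:R + (1 - nu) * (i.+1)%:R = (i.+1)%:R :> R by ring.
have Bd : B_set R f i d.
  exists (d%:R, (i.+1)%:R), (0, -1); split => //.
  by rewrite addr0 -addn1 natrD addrK.
by split; exists d.
Qed.
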